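(* For every $n\in\mathbb{N}$, every nonempty chain $c_k$ over $[n]$ with complementary chain $c'_{n-k}$, and all formulas $\varphi,\psi$, the following are derivable in $\mathbf{CPN}_n$: (i) $\vdash_{(n)}\perp_{c_k}\to_{(n)}\neg_{c'_{n-k}}(\varphi\wedge_{(n)}\neg_{c'_{n-k}}\varphi)$; (ii) $\vdash_{(n)}\neg_{c_k}\varphi\wedge_{(n)}\neg_{c_k}\psi\to_{(n)}\neg_{c_k}(\varphi\wedge_{(n)}\psi)$; (iii) $\vdash_{(n)}\neg_{c_k}(\varphi\vee_{(n)}\psi)\to_{(n)}\neg_{c_k}\varphi\vee_{(n)}\neg_{c_k}\psi$; (iv) $\vdash_{(n)}\neg_{c_k}(\varphi\wedge_{(n)}\psi)\to_{(n)}\neg_{c_k}\varphi\vee_{(n)}\neg_{c_k}\psi$; (v) $\vdash_{(n)}\neg_{c_k}\varphi\wedge_{(n)}\neg_{c_k}\psi\to_{(n)}\neg_{c_k}(\varphi\vee_{(n)}\psi)$.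
   Context: Fix $n\in\mathbb{N}$, $n\ge 1$, and write $[n]=\{1,\dots,n\}$. Chains: a chain over $[n]$ is a finite sequence of distinct elements of $[n]$; chains with the same length and the same symbols are identified, so a chain is effectively a subset of $[n]$. $c_k$ denotes a chain with $k$ symbols, $\epsilon$ the empty chain, and $(n)$ the chain consisting of all symbols of $[n]$. For chains $c,d$: the concatenation $c\cdot d$ is the chain of symbols occurring in $c$ or in $d$; the coconcatenation $c\otimes d$ is the chain of symbols occurring in exactly one of $c,d$; $d$ is a subchain of $c$ if every symbol of $d$ is a symbol of $c$. The complementary chain $c'_{n-k}$ of $c_k$ is the chain of the symbols of $[n]$ not occurring in $c_k$. Language of $\mathbf{CPN}_n$: a countable set $P_n$ of propositional letters; constants $\perp_c$ for each chain $c$ over $[n]$ with $1\le |c|\le n-1$, and constants $\perp_{(n)}$ (contradiction) and $\top_{(n)}$ (truth); a unary connective $\neg_c$ for each nonempty chain $c$ over $[n]$ ($\neg_{(n)}$ is the strong negation; the $\neg_c$ with $|c|\le n-1$ are weak negations); a binary connective $\to_{(n)}$. Formulas: propositional letters and constants are formulas; if $\varphi,\psi$ are formulas then so are $\neg_c\varphi$ and $(\varphi\to_{(n)}\psi)$. Conventions: $\neg_\epsilon\varphi:=\varphi$, $\perp_\epsilon:=\top_{(n)}$, and $\perp_c$ for $c=(n)$ means $\perp_{(n)}$. Abbreviations: $\varphi\wedge_{(n)}\psi:=\neg_{(n)}(\varphi\to_{(n)}\neg_{(n)}\psi)$, $\varphi\vee_{(n)}\psi:=\neg_{(n)}\varphi\to_{(n)}\psi$,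 $\varphi\leftrightarrow_{(n)}\psi:=(\varphi\to_{(n)}\psi)\wedge_{(n)}(\psi\to_{(n)}\varphi)$. Axioms of $\mathbf{CPN}_n$, for all formulas $\varphi,\psi,\chi$ and all nonempty chains $c_k,c_r$ over $[n]$: (A1) $\varphi\to_{(n)}(\psi\to_{(n)}\varphi)$; (A2) $(\varphi\to_{(n)}(\psi\to_{(n)}\chi))\to_{(n)}((\varphi\to_{(n)}\psi)\to_{(n)}(\varphi\to_{(n)}\chi))$; (A3) $(\neg_{(n)}\psi\to_{(n)}\neg_{(n)}\varphi)\to_{(n)}((\neg_{(n)}\psi\to_{(n)}\varphi)\to_{(n)}\psi)$; (A4) $\varphi\to_{(n)}(\perp_{c_k}\to_{(n)}\neg_{c_k}\varphi)$; (A5) $\neg_{c_k}\neg_{c_r}\varphi\leftrightarrow_{(n)}\neg_{c_k\otimes c_r}\varphi$; (A6) $\neg_{c_k}\perp_{c_r}\leftrightarrow_{(n)}\perp_{c_k\otimes c_r}$; (A7) $\perp_{c_k}\to_{(n)}\perp_{c_r}$, whenever $c_r$ is a subchain of $c_k$. The only rule of inference is modus ponens (from $\varphi$ and $\varphi\to_{(n)}\psi$ infer $\psi$). For a set $\Sigma$ of formulas, $\Sigma\vdash_{(n)}\varphi$ means there is a finite sequence of formulas ending with $\varphi$, each of which is an axiom, a member of $\Sigma$, or obtained from two earlier members by modus ponens; $\vdash_{(n)}\varphi$ means $\emptyset\vdash_{(n)}\varphi$. *)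

(* Defs.v *)
From mathcomp Require Import all_boot.
Set Implicit Arguments. Unset Strict Implicit. Unset Printing Implicit Defensive.

(* Symbols of [n] are represented by 'I_n (i.e. 0..n-1 standing for 1..n).
   A chain over [n] is identified with its set of symbols: {set 'I_n}. *)

Definition cocat (n : nat) (c d : {set 'I_n}) : {set 'I_n} :=
  (c :\: d) :|: (d :\: c).

(* Formulas of CPN_n.
   - Var p : propositional letters (P_n countable, indexed by nat)
   - Bot c : the constant bot_c; Bot set0 is top_(n) (convention bot_eps := top),
             Bot [set: 'I_n] is bot_(n), other c are the constants bot_c with 1<=|c|<=n-1
   - Neg c : the connective neg_c, only for nonempty chains c
   - Imp   : ->_(n) *)
Inductive form (n : nat) : Type :=
| Var : nat -> form n
| Bot : {set 'I_n} -> form n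
| Neg : forall c : {set 'I_n}, c != set0 -> form n -> form n
| Imp : form n -> form n -> form n.

Arguments Var {n} _.
Arguments Bot {n} _.
Arguments Imp {n} _ _.

(* neg_c with the convention neg_eps phi := phi *)
Definition negc (n : nat) (c : {set 'I_n}) (phi : form n) : form n :=
  (if c != set0 as b return (c != set0) = b -> form n
   then fun h => Neg h phi else fun _ => phi) erefl.

Definition fullc (n : nat) : {set 'I_n} := [set: 'I_n].
Definition sneg (n : nat) (phi : form n) : form n := negc (fullc n) phi.
Definition fand (n : nat) (phi psi : form n) : form n := sneg (Imp phi (sneg psi)).
Definition forr (n : nat) (phi psi : form n) : form n := Imp (sneg phi) psi.
Definition fiff (n : nat) (phi psi : form n) : form n := fand (Imp phi psi) (Imp psi phi).

Inductive axiom (n : nat) : form n -> Prop :=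
| A1 (phi psi : form n) : axiom (Imp phi (Imp psi phi))
| A2 (phi psi chi : form n) :
    axiom (Imp (Imp phi (Imp psi chi)) (Imp (Imp phi psi) (Imp phi chi)))
| A3 (phi psi : form n) :
    axiom (Imp (Imp (sneg psi) (sneg phi)) (Imp (Imp (sneg psi) phi) psi))
| A4 (ck : {set 'I_n}) (phi : form n) : ck != set0 ->
    axiom (Imp phi (Imp (Bot ck) (negc ck phi)))
| A5 (ck cr : {set 'I_n}) (phi : form n) : ck != set0 -> cr != set0 ->
    axiom (fiff (negc ck (negc cr phi)) (negc (cocat ck cr) phi))
| A6 (ck cr : {set 'I_n}) : ck != set0 -> cr != set0 ->
    axiom (fiff (negc ck (Bot cr)) (Bot (cocat ck cr)))
| A7 (ck cr : {set 'I_n}) : ck != set0 -> cr != set0 -> cr \subset ck ->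
    axiom (Imp (Bot ck) (Bot cr)).

Inductive deriv (n : nat) (Sigma : form n -> Prop) : form n -> Prop :=
| DAx (phi : form n) : axiom phi -> deriv Sigma phi
| DHyp (phi : form n) : Sigma phi -> deriv Sigma phi
| DMP (phi psi : form n) : deriv Sigma phi -> deriv Sigma (Imp phi psi) -> deriv Sigma psi.

Definition provable (n : nat) (phi : form n) : Prop := deriv (fun _ => False) phi.

(* Main.v *)
Require Import Defs.
From mathcomp Require Import all_boot.
Set Warnings "-notation-overridden".
From Stdlib Require List.
Set Implicit Arguments. Unset Strict Implicit.

Lemma negc0 n (X : form n) : negc set0 X = X.
Proof.
rewrite /negc. move: (erefl (set0 != set0 :> {set 'I_n})).
case: {2 3}(set0 != set0 :> {set 'I_n}) => // e.
exfalso; have := e; by rewrite eqxx.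
Qed.

Section S.
Variable n : nat.
Implicit Types A B C X : form n.
Implicit Types G : seq (form n).
Definition pr G A := deriv (fun x => List.In x G) A.
Local Notation N := (@sneg n).

Ltac inh := first [by left | right; inh].
Ltac hyp := apply: DHyp => /=; inh.

Lemma mp G A B : pr G (Imp A B) -> pr G A -> pr G B.
Proof. move=> h1 h2; exact: DMP h2 h1. Qed.
Lemma ax G A : axiom A -> pr G A. Proof. exact: DAx. Qed.
Lemma weak G A B : pr G B -> pr (A::G) B.
Proof. elim=> [x a|x h|x y _ h1 _ h2]; [exact: DAx|apply: DHyp => /=; by right|exact: DMP h1 h2]. Qed.
Lemma idA G A : pr G (Imp A A).
Proof.
apply: (mp (mp (ax _ (A2 A (Imp A A) A)) (ax _ (A1 _ _)))).
exact: ax (A1 _ _).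
Qed.
Lemma ded G A B : pr (A::G) B -> pr G (Imp A B).
Proof.
elim=> [x a|x h|x y _ h1 _ h2].
- exact: mp (ax _ (A1 _ _)) (ax _ a).
- case: h => [<-|h]; first exact: idA.
  exact: mp (ax _ (A1 _ _)) (DHyp h).
- exact: mp (mp (ax _ (A2 _ _ _)) h2) h1.
Qed.
Lemma k G A B : pr G A -> pr G (Imp B A).
Proof. exact: mp (ax _ (A1 _ _)). Qed.
Lemma expl G A B : pr G (N A) -> pr G A -> pr G B.
Proof.
move=> h1 h2; apply: (mp (mp (ax _ (A3 A B)) (k _ h1))); exact: k.
Qed.
Lemma raa G A B : pr (N A :: G) B -> pr (N A :: G) (N B) -> pr G A.
Proof.
move=> h1 h2; exact: mp (mp (ax _ (A3 B A)) (ded h2)) (ded h1).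
Qed.
Lemma dne G A : pr G (N (N A)) -> pr G A.
Proof. move=> h; apply: (@raa _ _ (N A)); [hyp| exact: weak]. Qed.
Lemma dni G A : pr G A -> pr G (N (N A)).
Proof. move=> h; apply: (@raa _ _ A); [exact: weak | apply: dne; hyp]. Qed.
Lemma cases G A C : pr (A::G) C -> pr (N A::G) C -> pr G C.
Proof.
move=> h1 h2; apply: (@raa _ _ C); last hyp.
have hna : pr (N C :: G) (N A).
  apply: (@raa _ _ C); last hyp.
  apply: mp (weak _ (weak _ (ded h1))) _; apply: dne; hyp.
exact: mp (weak _ (ded h2)) hna.
Qed.
Lemma and_i G A B : pr G A -> pr G B -> pr G (fand A B).
Proof.
move=> h1 h2; apply: (@raa _ _ B); first exact: weak.
apply: mp _ (weak _ h1); apply: dne; hyp.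
Qed.
Lemma and_e1 G A B : pr G (fand A B) -> pr G A.
Proof.
move=> h; apply: (@raa _ _ (Imp A (N B))); last exact: weak.
apply: ded; apply: expl; hyp.
Qed.
Lemma and_e2 G A B : pr G (fand A B) -> pr G B.
Proof.
move=> h; apply: (@raa _ _ (Imp A (N B))); last exact: weak.
apply: k; hyp.
Qed.
Lemma or_i1 G A B : pr G A -> pr G (forr A B).
Proof. move=> h; apply: ded; apply: expl; [hyp|exact: weak]. Qed.
Lemma or_i2 G A B : pr G B -> pr G (forr A B).
Proof. exact: k. Qed.
Lemma or_e G A B C : pr G (forr A B) -> pr (A::G) C -> pr (B::G) C -> pr G C.
Proof.
move=> h h1 h2; apply: (cases h1).
apply: mp (weak _ (ded h2)) _; apply: mp (weak _ h) _; hyp.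
Qed.
Lemma iff1 G A B : pr G (fiff A B) -> pr G (Imp A B). Proof. exact: and_e1. Qed.
Lemma iff2 G A B : pr G (fiff A B) -> pr G (Imp B A). Proof. exact: and_e2. Qed.

Lemma cocat_id (c : {set 'I_n}) : cocat c c = set0.
Proof. apply/setP=> x; rewrite !inE; by case: (x \in c). Qed.
Lemma cocat_fc (c : {set 'I_n}) : cocat (fullc n) c = ~: c.
Proof. apply/setP=> x; rewrite !inE; by case: (x \in c). Qed.
Lemma cocat_cc (c : {set 'I_n}) : cocat (~: c) c = fullc n.
Proof. apply/setP=> x; rewrite !inE; by case: (x \in c). Qed.
Lemma cocat_cf (c : {set 'I_n}) : cocat (~: c) (fullc n) = c.
Proof. apply/setP=> x; rewrite !inE; by case: (x \in c). Qed.

Hypothesis hn : (0 < n)%N.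
Lemma fullc_ne : fullc n != set0.
Proof. apply/set0Pn; exists (Ordinal hn); by rewrite inE. Qed.

Lemma E1 G c X : c != set0 -> pr G (Bot c) -> pr G X -> pr G (negc c X).
Proof. move=> hc h1 h2; exact: mp (mp (ax _ (A4 X hc)) h2) h1. Qed.
Lemma E2 G c X : c != set0 -> pr G (Bot c) -> pr G (negc c X) -> pr G X.
Proof.
move=> hc h1 h2; have := E1 hc h1 h2.
have := iff1 (ax G (A5 X hc hc)); rewrite cocat_id negc0; exact: mp.
Qed.
Lemma compl_ne (c : {set 'I_n}) : c != fullc n -> ~: c != set0.
Proof.
move=> h; apply: contra h => /eqP h; apply/eqP.
by rewrite -(setCK c) h setC0.
Qed.
Lemma nbot_compl G c : c != set0 -> pr G (N (Bot c)) -> pr G (Bot (~: c)).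
Proof.
move=> hc h; have := iff1 (ax G (A6 fullc_ne hc)); rewrite cocat_fc => h2.
exact: mp h2 h.
Qed.
Lemma bot_compl G c : c != fullc n -> pr G (Bot c) -> pr G (N (Bot (~: c))).
Proof.
move=> hc h; have := iff2 (ax G (A6 fullc_ne (compl_ne hc))).
rewrite cocat_fc setCK => h2; exact: mp h2 h.
Qed.
Lemma negc_full X : negc (fullc n) X = N X. Proof. by []. Qed.
Lemma E3 G c X : c != set0 -> pr G (N (Bot c)) -> pr G (negc c X) -> pr G (N X).
Proof.
move=> hc h1 h2; case: (eqVneq c (fullc n)) => [e|ne]; first by move: h2; rewrite e.
have hb := nbot_compl hc h1.
have := E1 (compl_ne ne) hb h2.
have := iff1 (ax G (A5 X (compl_ne ne) hc)); rewrite cocat_cc; exact: mp.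
Qed.
Lemma E4 G c X : c != set0 -> pr G (N (Bot c)) -> pr G (N X) -> pr G (negc c X).
Proof.
move=> hc h1 h2; case: (eqVneq c (fullc n)) => [e|ne]; first by rewrite e.
have hb := nbot_compl hc h1.
have := E1 (compl_ne ne) hb h2.
have := iff1 (ax G (A5 X (compl_ne ne) fullc_ne)); rewrite cocat_cf; exact: mp.
Qed.
Lemma nbotfull G : pr G (N (Bot (fullc n))).
Proof.
apply: (@cases _ (Bot (fullc n))); last by hyp.
have := ax (Bot (fullc n) :: G) (A4 (Bot (fullc n)) fullc_ne).
move=> h; apply: mp (mp h _) _; hyp.
Qed.

Lemma items (ck : {set 'I_n}) (phi psi : form n) : ck != set0 ->
  let ck' := ~: ck in
  [/\ pr [::] (Imp (Bot ck) (negc ck' (fand phi (negc ck' phi)))),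
      pr [::] (Imp (fand (negc ck phi) (negc ck psi)) (negc ck (fand phi psi))),
      pr [::] (Imp (negc ck (forr phi psi)) (forr (negc ck phi) (negc ck psi))),
      pr [::] (Imp (negc ck (fand phi psi)) (forr (negc ck phi) (negc ck psi))) &
      pr [::] (Imp (fand (negc ck phi) (negc ck psi)) (negc ck (forr phi psi)))].
Proof.
move=> hc ck'; split.
-
  rewrite /ck'; case: (eqVneq ck (fullc n)) => [e|ne].
    rewrite e /fullc setCT !negc0; apply: ded; apply: expl; last hyp.
    exact: nbotfull.
  apply: ded; have hb := bot_compl ne (G := [:: Bot ck]) ltac:(hyp).
  have hc' := compl_ne ne.
  apply: (E4 hc' hb).
  apply: (@raa _ _ phi).
    apply: and_e1 (dne _); hyp.
  apply: (E3 hc' (weak _ hb)); apply: and_e2 (dne _); hyp.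
-
  apply: ded; apply: (@cases _ (Bot ck)).
    apply: (E1 hc); first hyp.
    apply: and_i; apply: (E2 hc); try hyp.
      apply: and_e1; hyp.
    apply: and_e2; hyp.
  apply: (E4 hc); first hyp.
  apply: dni; apply: k.
  apply: (E3 hc); first hyp.
  apply: and_e2; hyp.
-
  apply: ded; apply: (@cases _ (Bot ck)).
    have h : pr [:: Bot ck; negc ck (forr phi psi)] (forr phi psi).
      apply: (E2 hc); hyp.
    apply: or_e h _ _.
      apply: or_i1; apply: (E1 hc); hyp.
    apply: or_i2; apply: (E1 hc); hyp.
  have h : pr [:: N (Bot ck); negc ck (forr phi psi)] (N (forr phi psi)).
    apply: (E3 hc); hyp.
  apply: ded; apply: (E4 hc); first hyp.
  apply: (@raa _ _ (forr phi psi)); last by do 2 apply: weak.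
  apply: k; apply: dne; hyp.
-
  apply: ded; apply: (@cases _ (Bot ck)).
    have h : pr [:: Bot ck; negc ck (fand phi psi)] (fand phi psi).
      apply: (E2 hc); hyp.
    apply: ded; apply: (E1 hc); first hyp.
    apply: and_e2 (weak _ h).
  have h : pr [:: N (Bot ck); negc ck (fand phi psi)] (N (fand phi psi)).
    apply: (E3 hc); hyp.
  apply: ded; apply: (E4 hc); first hyp.
  have hp : pr [:: N (negc ck phi); N (Bot ck); negc ck (fand phi psi)] phi.
    apply: (@raa _ _ (negc ck phi)); last hyp.
    apply: (E4 hc); hyp.
  apply: mp _ hp; apply: dne; exact: weak.
-
  apply: ded; apply: (@cases _ (Bot ck)).
    apply: (E1 hc); first hyp.
    apply: or_i1; apply: (E2 hc); first hyp.
    apply: and_e1; hyp.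
  apply: (E4 hc); first hyp.
  apply: (@raa _ _ psi).
    apply: mp (dne _) _; first hyp.
    apply: (E3 hc); first hyp.
    apply: and_e1; hyp.
  apply: (E3 hc); first hyp.
  apply: and_e2; hyp.
Qed.
End S.

Theorem mainTheorem6 (n : nat) (ck : {set 'I_n}) (phi psi : form n) :
  (0 < n)%N -> ck != set0 ->
  let ck' := ~: ck in
  [/\ provable (Imp (Bot ck) (negc ck' (fand phi (negc ck' phi)))),
      provable (Imp (fand (negc ck phi) (negc ck psi)) (negc ck (fand phi psi))),
      provable (Imp (negc ck (forr phi psi)) (forr (negc ck phi) (negc ck psi))),
      provable (Imp (negc ck (fand phi psi)) (forr (negc ck phi) (negc ck psi))) &
      provable (Imp (fand (negc ck phi) (negc ck psi)) (negc ck (forr phi psi)))].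
Proof. move=> hn hc; exact: (items hn phi psi hc). Qed.
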